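(* Let $G$ be a finitely generated group and $\mu$ a finitely supported symmetric non-degenerate probability measure on $G$. Let $h:G\to\mathbb{R}$ be a $\mu$-harmonic function of subexponential growth. Then for every element $\gamma$ of finite order in the FC-center $Z^{FC}(G)$ and every $x\in G$, one has $h(\gamma x)=h(x)$.
   Context: Non-degenerate means the support of $\mu$ generates $G$ as a semigroup. The FC-center $Z^{FC}(G)$ is the subgroup of elements with finite conjugacy class. $h$ is $\mu$-harmonic if $h(x)=\sum_g h(xg)\mu(g)$ for all $x$. With $M_h(n)=\max\{|h(x)|:d(e,x)\le n\}$ for a word metric $d$, $h$ has subexponential growth if $e^{-cn}M_h(n)\to0$ as $n\to\infty$ for every $c>0$. *)

(* Defs.v *)
From Stdlib Require Import Reals List.
Import ListNotations.
Open Scope R_scope.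

Record Group := {
  gcar :> Type;
  gmul : gcar -> gcar -> gcar;
  ginv : gcar -> gcar;
  gone : gcar;
  gassoc : forall a b c, gmul a (gmul b c) = gmul (gmul a b) c;
  gone_l : forall a, gmul gone a = a;
  gone_r : forall a, gmul a gone = a;
  ginv_l : forall a, gmul (ginv a) a = gone;
  ginv_r : forall a, gmul a (ginv a) = gone
}.

Arguments gmul {g} _ _.
Arguments ginv {g} _.
Arguments gone {g}.

Definition prodw {G : Group} (w : list G) : G := fold_right gmul gone w.

Fixpoint gpow {G : Group} (g : G) (n : nat) : G :=
  match n with O => gone | S k => gmul g (gpow g k) end.

Definition gens {G : Group} (S : list G) : list G := S ++ map ginv S.

Definition generates {G : Group} (S : list G) : Prop :=
  forall x : G, exists w : list G, Forall (fun s => In s (gens S)) w /\ x = prodw w.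

Fixpoint words_len {T : Type} (A : list T) (n : nat) : list (list T) :=
  match n with
  | O => [nil]
  | S k => flat_map (fun a => map (cons a) (words_len A k)) A
  end.
Definition words_upto {T : Type} (A : list T) (n : nat) : list (list T) :=
  flat_map (words_len A) (seq 0 (S n)).

(* M_h(n) = max { |h x| : d_S(e,x) <= n } for the word metric of S;
   the ball of radius n is the set of products of words of length <= n over S ∪ S^{-1}. *)
Definition Mh {G : Group} (S : list G) (h : G -> R) (n : nat) : R :=
  fold_right Rmax 0 (map (fun w => Rabs (h (prodw w))) (words_upto (gens S) n)).

Definition subexp_growth {G : Group} (S : list G) (h : G -> R) : Prop :=
  forall c : R, 0 < c -> Un_cv (fun n => exp (- c * INR n) * Mh S h n) 0.

Definition fin_prob {G : Group} (mu : G -> R) (supp : list G) : Prop :=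
  NoDup supp /\ (forall g, 0 <= mu g) /\ (forall g, mu g <> 0 -> In g supp) /\
  fold_right Rplus 0 (map mu supp) = 1.

Definition symmetric_meas {G : Group} (mu : G -> R) : Prop :=
  forall g, mu (ginv g) = mu g.

(* the support of mu generates G as a semigroup *)
Definition nondegenerate {G : Group} (mu : G -> R) : Prop :=
  forall x : G, exists w : list G, w <> nil /\ Forall (fun g => mu g <> 0) w /\ x = prodw w.

Definition harmonic {G : Group} (mu : G -> R) (supp : list G) (h : G -> R) : Prop :=
  forall x : G, h x = fold_right Rplus 0 (map (fun g => h (gmul x g) * mu g) supp).

(* FC-center: finite conjugacy class *)
Definition in_FC_center {G : Group} (g : G) : Prop :=
  exists L : list G, forall y : G, In (gmul (ginv y) (gmul g y)) L.

Definition finite_order {G : Group} (g : G) : Prop :=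
  exists n : nat, (0 < n)%nat /\ gpow g n = gone.

(* Main.v *)
Require Import Defs.
From Stdlib Require Import Reals List Lia Lra FunctionalExtensionality.
Import ListNotations.
Open Scope R_scope.

Definition sumL {T : Type} (l : list T) (F : T -> R) : R := fold_right Rplus 0 (map F l).

Lemma sumL_ge_term {T} (l : list T) F g0 :
  (forall g, In g l -> 0 <= F g) -> In g0 l -> F g0 <= sumL l F.
Proof.
  induction l as [|a l IH]; simpl; intros H Hin; [contradiction|].
  unfold sumL in *; simpl.
  assert (0 <= fold_right Rplus 0 (map F l)).
  { clear IH Hin. induction l as [|b l IH2]; simpl; [lra|].
    assert (0 <= F b) by (apply H; simpl; auto).
    assert (0 <= fold_right Rplus 0 (map F l)) by (apply IH2; intros; apply H; simpl in *; tauto).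
    lra. }
  destruct Hin as [<-|Hin].
  - lra.
  - assert (F g0 <= fold_right Rplus 0 (map F l)) by (apply IH; auto).
    assert (0 <= F a) by (apply H; simpl; auto). lra.
Qed.

Lemma sumL_le {T} (l : list T) F H :
  (forall g, In g l -> F g <= H g) -> sumL l F <= sumL l H.
Proof.
  unfold sumL; induction l as [|a l IH]; simpl; intros Hl; [lra|].
  assert (F a <= H a) by auto.
  assert (fold_right Rplus 0 (map F l) <= fold_right Rplus 0 (map H l)) by auto.
  lra.
Qed.

Lemma sumL_nonneg {T} (l : list T) F :
  (forall g, In g l -> 0 <= F g) -> 0 <= sumL l F.
Proof.
  unfold sumL; induction l as [|a l IH]; simpl; intros H; [lra|].
  assert (0 <= F a) by auto.
  assert (0 <= fold_right Rplus 0 (map F l)) by auto. lra.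
Qed.

Lemma sumL_plus {T} (l : list T) F H :
  sumL l (fun g => F g + H g) = sumL l F + sumL l H.
Proof. unfold sumL; induction l; simpl; [ring| rewrite IHl; ring]. Qed.

Lemma sumL_scal {T} (l : list T) c F :
  sumL l (fun g => c * F g) = c * sumL l F.
Proof. unfold sumL; induction l; simpl; [ring| rewrite IHl; ring]. Qed.

Lemma sumL_ext {T} (l : list T) F H :
  (forall g, F g = H g) -> sumL l F = sumL l H.
Proof. intros E. unfold sumL; induction l; simpl; [ring| rewrite IHl, E; ring]. Qed.

Lemma max_In {T} (l : list T) (F : T -> R) v :
  In v l -> F v <= fold_right Rmax 0 (map F l).
Proof.
  induction l as [|a l IH]; simpl; [tauto|].
  intros [<-|H].
  - apply Rmax_l.
  - eapply Rle_trans; [apply IH; auto| apply Rmax_r].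
Qed.

Lemma words_len_In {T} (A : list T) w :
  Forall (fun s => In s A) w -> In w (words_len A (length w)).
Proof.
  induction w as [|a w IH]; simpl; intros H; [auto|].
  inversion H; subst. apply in_flat_map. exists a. split; auto.
  apply in_map. auto.
Qed.

Lemma words_upto_In {T} (A : list T) w n :
  Forall (fun s => In s A) w -> (length w <= n)%nat -> In w (words_upto A n).
Proof.
  intros H Hl. unfold words_upto. apply in_flat_map. exists (length w).
  split; [apply in_seq; lia| apply words_len_In; auto].
Qed.

Lemma Mh_bound {G : Group} (S : list G) h w n :
  Forall (fun s => In s (gens S)) w -> (length w <= n)%nat -> Rabs (h (prodw w)) <= Mh S h n.
Proof.
  intros H Hl. unfold Mh.
  apply (max_In _ (fun w => Rabs (h (prodw w)))). apply words_upto_In; auto.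
Qed.

Lemma Mh_nonneg {G : Group} (S : list G) h n : 0 <= Mh S h n.
Proof.
  unfold Mh. generalize (words_upto (gens S) n). induction l; simpl; [lra|].
  eapply Rle_trans; [apply IHl| apply Rmax_r].
Qed.

Lemma prodw_app {G : Group} (u v : list G) : prodw (u ++ v) = gmul (prodw u) (prodw v).
Proof.
  induction u; simpl. - rewrite gone_l; auto. - rewrite IHu, gassoc; auto.
Qed.

Lemma mul_inv_cancel_l {G : Group} (x y : G) : gmul x (gmul (ginv x) y) = y.
Proof. rewrite gassoc, ginv_r, gone_l; auto. Qed.

Lemma inv_mul_cancel_l {G : Group} (x y : G) : gmul (ginv x) (gmul x y) = y.
Proof. rewrite gassoc, ginv_l, gone_l; auto. Qed.

Lemma conj_pow {G : Group} (g x : G) i :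
  gmul (ginv x) (gmul (gpow g i) x) = gpow (gmul (ginv x) (gmul g x)) i.
Proof.
  induction i; simpl.
  - rewrite gone_l, ginv_l; auto.
  - rewrite <- IHi. rewrite !gassoc.
    rewrite <- (gassoc _ _ x (ginv x)), ginv_r, gone_r. auto.
Qed.

Lemma uniform_words {G : Group} (Good : G -> list G -> Prop) (wt : list G -> R) (l : list G) :
  (forall y w, Good y w -> 0 < wt w) ->
  (forall y, In y l -> exists w, Good y w) ->
  exists L m0, 0 < m0 /\ forall y, In y l -> exists w, Good y w /\ (length w <= L)%nat /\ m0 <= wt w.
Proof.
  intros Hpos. induction l as [|a l IH]; intros H.
  - exists O, 1. split; [lra| simpl; tauto].
  - destruct IH as [L [m0 [Hm0 HL]]]. { intros; apply H; simpl; auto. }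
    destruct (H a) as [wa Ha]; [simpl; auto|].
    exists (Nat.max L (length wa)), (Rmin m0 (wt wa)). split.
    + apply Rmin_pos; eauto.
    + intros y [<-|Hy].
      * exists wa. split; [auto| split; [lia| apply Rmin_r]].
      * destruct (HL y Hy) as [w [Hw [Hl Hwt]]]. exists w. split; [auto| split; [lia|]].
        eapply Rle_trans; [apply Rmin_l| auto].
Qed.
Definition Pop {G : Group} (mu : G -> R) (supp : list G) (F : G -> R) (x : G) : R :=
  sumL supp (fun g => F (gmul x g) * mu g).
Definition iterP {G : Group} (mu : G -> R) (supp : list G) (n : nat) (F : G -> R) : G -> R :=
  Nat.iter n (Pop mu supp) F.
Definition prodmu {G : Group} (mu : G -> R) (w : list G) : R :=
  fold_right (fun g acc => mu g * acc) 1 w.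

Lemma iterP_S {G : Group} mu supp n (F : G -> R) : iterP mu supp (S n) F = Pop mu supp (iterP mu supp n F).
Proof. reflexivity. Qed.

Lemma iterP_plus {G : Group} mu supp n (F H : G -> R) x :
  iterP mu supp n (fun y => F y + H y) x = iterP mu supp n F x + iterP mu supp n H x.
Proof.
  revert x; induction n; intros x; [reflexivity|].
  rewrite !iterP_S. unfold Pop at 1.
  rewrite (sumL_ext _ _ (fun g => iterP mu supp n F (gmul x g) * mu g + iterP mu supp n H (gmul x g) * mu g)).
  - rewrite sumL_plus. reflexivity.
  - intros g. rewrite IHn. ring.
Qed.

Lemma iterP_scal {G : Group} mu supp n (F : G -> R) c x :
  iterP mu supp n (fun y => c * F y) x = c * iterP mu supp n F x.
Proof.
  revert x; induction n; intros x; [reflexivity|].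
  rewrite !iterP_S. unfold Pop at 1.
  rewrite (sumL_ext _ _ (fun g => c * (iterP mu supp n F (gmul x g) * mu g))).
  - rewrite sumL_scal. reflexivity.
  - intros g. rewrite IHn. ring.
Qed.

Lemma iterP_mono {G : Group} mu supp n (F H : G -> R) :
  (forall g, 0 <= mu g) -> (forall y, F y <= H y) -> forall x, iterP mu supp n F x <= iterP mu supp n H x.
Proof.
  intros Hmu Hle. induction n; intros x; [apply Hle|].
  rewrite !iterP_S. unfold Pop. apply sumL_le. intros g _.
  apply Rmult_le_compat_r; auto.
Qed.

Lemma iterP_nonneg {G : Group} mu supp n (F : G -> R) :
  (forall g, 0 <= mu g) -> (forall y, 0 <= F y) -> forall x, 0 <= iterP mu supp n F x.
Proof.
  intros Hmu H0. induction n; intros x; [apply H0|].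
  rewrite !iterP_S. unfold Pop. apply sumL_nonneg. intros g _.
  apply Rmult_le_pos; auto.
Qed.

Lemma Pop_bound {G : Group} (mu : G -> R) supp F x c :
  (forall g, 0 <= mu g) -> fold_right Rplus 0 (map mu supp) = 1 ->
  (forall g, In g supp -> F (gmul x g) <= c) -> Pop mu supp F x <= c.
Proof.
  intros Hmu Hsum Hb. unfold Pop.
  apply Rle_trans with (sumL supp (fun g => c * mu g)).
  - apply sumL_le. intros g Hg. apply Rmult_le_compat_r; auto.
  - rewrite sumL_scal. unfold sumL. rewrite Hsum. lra.
Qed.

Lemma Pop_ge_term {G : Group} (mu : G -> R) supp F x g :
  (forall g, 0 <= mu g) -> (forall g, mu g <> 0 -> In g supp) -> (forall y, 0 <= F y) ->
  mu g <> 0 -> F (gmul x g) * mu g <= Pop mu supp F x.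
Proof.
  intros Hmu Hs H0 Hg. unfold Pop.
  apply (sumL_ge_term supp (fun g => F (gmul x g) * mu g)); auto.
  intros; apply Rmult_le_pos; auto.
Qed.

Lemma iter_ge_word {G : Group} (mu : G -> R) supp F :
  (forall g, 0 <= mu g) -> (forall g, mu g <> 0 -> In g supp) -> (forall y, 0 <= F y) ->
  forall u x, Forall (fun g => mu g <> 0) u ->
  prodmu mu u * F (gmul x (prodw u)) <= iterP mu supp (length u) F x.
Proof.
  intros Hmu Hs H0. induction u as [|g u IH]; intros x Hu.
  - simpl. rewrite gone_r. unfold iterP; simpl. lra.
  - inversion Hu; subst. simpl length. rewrite iterP_S.
    eapply Rle_trans; [| apply (Pop_ge_term mu supp _ x g); auto].
    2: { intros; apply iterP_nonneg; auto. }
    simpl. rewrite gassoc.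
    specialize (IH (gmul x g) H3).
    assert (0 <= mu g) by auto. nra.
Qed.

Lemma prodmu_nonneg {G : Group} (mu : G -> R) w : (forall g, 0 <= mu g) -> 0 <= prodmu mu w.
Proof. intros H; induction w; simpl; [lra|]. apply Rmult_le_pos; auto. Qed.

Lemma prodmu_le1 {G : Group} (mu : G -> R) w : (forall g, 0 <= mu g) -> (forall g, mu g <= 1) -> prodmu mu w <= 1.
Proof.
  intros H H1; induction w; simpl; [lra|].
  assert (0 <= prodmu mu w) by (apply prodmu_nonneg; auto).
  specialize (H a); specialize (H1 a). nra.
Qed.

Lemma prodmu_app {G : Group} (mu : G -> R) u v : prodmu mu (u ++ v) = prodmu mu u * prodmu mu v.
Proof. induction u; simpl; [ring| rewrite IHu; ring]. Qed.

Lemma prodmu_pos {G : Group} (mu : G -> R) w : (forall g, 0 <= mu g) ->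
  Forall (fun g => mu g <> 0) w -> 0 < prodmu mu w.
Proof.
  intros H Hw; induction Hw; simpl; [lra|].
  apply Rmult_lt_0_compat; auto. specialize (H x). lra.
Qed.
Definition Ef {G : Group} (mu : G -> R) (supp : list G) (f : G -> R) (y : G) : R :=
  sumL supp (fun g => (f (gmul y g) - f y) * (f (gmul y g) - f y) * mu g).

Lemma expand_sq {G : Group} (mu : G -> R) (f : G -> R) x l :
  sumL l (fun g => (f (gmul x g) - f x) * (f (gmul x g) - f x) * mu g) =
  sumL l (fun g => f (gmul x g) * f (gmul x g) * mu g) - 2 * f x * sumL l (fun g => f (gmul x g) * mu g)
  + f x * f x * sumL l mu.
Proof. unfold sumL; induction l; simpl; [ring| rewrite IHl; ring]. Qed.


Lemma PQ_eq {G : Group} (mu : G -> R) supp f y :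
  fold_right Rplus 0 (map mu supp) = 1 -> harmonic mu supp f ->
  Pop mu supp (fun z => f z * f z) y = f y * f y + Ef mu supp f y.
Proof.
  intros Hsum Hh. unfold Ef. rewrite expand_sq. unfold Pop.
  assert (E1 : sumL supp (fun g => f (gmul y g) * mu g) = f y) by (symmetry; apply Hh).
  assert (E2 : sumL supp mu = 1) by exact Hsum.
  rewrite E1, E2. ring.
Qed.

Lemma Ef_nonneg {G : Group} (mu : G -> R) supp f y :
  (forall g, 0 <= mu g) -> 0 <= Ef mu supp f y.
Proof.
  intros Hmu. unfold Ef. apply sumL_nonneg. intros g _.
  apply Rmult_le_pos; [apply Rle_0_sqr| auto].
Qed.

Lemma iterP_diff {G : Group} (mu : G -> R) supp f j x :
  fold_right Rplus 0 (map mu supp) = 1 -> harmonic mu supp f ->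
  iterP mu supp (S j) (fun z => f z * f z) x =
  iterP mu supp j (fun z => f z * f z) x + iterP mu supp j (Ef mu supp f) x.
Proof.
  intros Hsum Hh. unfold iterP. rewrite Nat.iter_succ_r.
  replace (Pop mu supp (fun z => f z * f z)) with (fun y => f y * f y + Ef mu supp f y).
  - apply iterP_plus.
  - apply functional_extensionality. intros y. rewrite PQ_eq; auto.
Qed.

Lemma iterP_mono_j {G : Group} (mu : G -> R) supp f j k x :
  (forall g, 0 <= mu g) ->
  fold_right Rplus 0 (map mu supp) = 1 -> harmonic mu supp f -> (j <= k)%nat ->
  iterP mu supp j (fun z => f z * f z) x <= iterP mu supp k (fun z => f z * f z) x.
Proof.
  intros Hmu Hsum Hh Hjk. induction Hjk; [lra|].
  rewrite iterP_diff; auto.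
  assert (0 <= iterP mu supp m (Ef mu supp f) x).
  { apply iterP_nonneg; auto. intros; apply Ef_nonneg; auto. }
  lra.
Qed.

Lemma step_bound {G : Group} (mu : G -> R) supp f L x u g :
  (forall g, 0 <= mu g) -> (forall g, mu g <> 0 -> In g supp) ->
  fold_right Rplus 0 (map mu supp) = 1 -> harmonic mu supp f ->
  Forall (fun g => mu g <> 0) u -> mu g <> 0 -> (length u + 1 <= L)%nat ->
  prodmu mu u * mu g * ((f (gmul (gmul x (prodw u)) g) - f (gmul x (prodw u))) *
                        (f (gmul (gmul x (prodw u)) g) - f (gmul x (prodw u))))
  <= iterP mu supp L (fun z => f z * f z) x - f x * f x.
Proof.
  intros Hmu Hs Hsum Hh Hu Hg HL.
  set (y := gmul x (prodw u)).
  assert (H1 : prodmu mu u * Ef mu supp f y <= iterP mu supp (length u) (Ef mu supp f) x).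
  { apply iter_ge_word; auto. intros; apply Ef_nonneg; auto. }
  assert (H2 : (f (gmul y g) - f y) * (f (gmul y g) - f y) * mu g <= Ef mu supp f y).
  { unfold Ef. apply (sumL_ge_term supp (fun g => (f (gmul y g) - f y) * (f (gmul y g) - f y) * mu g)); auto.
    intros; apply Rmult_le_pos; [apply Rle_0_sqr| auto]. }
  assert (H3 := iterP_diff mu supp f (length u) x Hsum Hh).
  assert (H4 : iterP mu supp (S (length u)) (fun z => f z * f z) x <= iterP mu supp L (fun z => f z * f z) x)
    by (apply iterP_mono_j; auto; lia).
  assert (H5 : iterP mu supp 0 (fun z => f z * f z) x <= iterP mu supp (length u) (fun z => f z * f z) x)
    by (apply iterP_mono_j; auto; lia).
  simpl in H5.
  assert (0 <= prodmu mu u) by (apply prodmu_nonneg; auto).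
  assert (H6 : prodmu mu u * ((f (gmul y g) - f y) * (f (gmul y g) - f y) * mu g) <= prodmu mu u * Ef mu supp f y)
    by (apply Rmult_le_compat_l; auto).
  nra.
Qed.
Lemma path_bound {G : Group} (mu : G -> R) supp f L x m0 :
  (forall g, 0 <= mu g) -> (forall g, mu g <> 0 -> In g supp) -> (forall g, mu g <= 1) ->
  fold_right Rplus 0 (map mu supp) = 1 -> harmonic mu supp f -> 0 < m0 ->
  forall w u, Forall (fun g => mu g <> 0) w -> Forall (fun g => mu g <> 0) u ->
  (length u + length w <= L)%nat -> m0 <= prodmu mu (u ++ w) ->
  Rabs (f (gmul x (prodw u)) - f (gmul (gmul x (prodw u)) (prodw w))) <=
  INR (length w) * sqrt ((iterP mu supp L (fun z => f z * f z) x - f x * f x) / m0).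
Proof.
  intros Hmu Hs Hle1 Hsum Hh Hm0.
  set (D := iterP mu supp L (fun z => f z * f z) x - f x * f x).
  induction w as [|g w IH]; intros u Hw Hu HL Hm.
  - simpl. rewrite gone_r. unfold Rminus. rewrite Rplus_opp_r, Rabs_R0. lra.
  - inversion Hw; subst. simpl prodw. simpl length.
    set (y := gmul x (prodw u)).
    assert (Hy : gmul x (prodw (u ++ [g])) = gmul y g).
    { unfold y. rewrite prodw_app. simpl. rewrite gone_r, gassoc. auto. }
    assert (Hu' : Forall (fun g => mu g <> 0) (u ++ [g])) by (apply Forall_app; auto).
    assert (IH' := IH (u ++ [g]) H2 Hu').
    clear IH.
    rewrite Hy in IH'.
    rewrite length_app in IH'. simpl length in IH'.
    rewrite <- app_assoc in IH'. simpl in IH'.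
    simpl length in HL. specialize (IH' ltac:(lia) Hm).
    assert (Hst := step_bound mu supp f L x u g Hmu Hs Hsum Hh Hu H1 ltac:(lia)).
    fold y in Hst. fold D in Hst.
    rewrite prodmu_app in Hm. simpl in Hm.
    assert (0 <= prodmu mu u) by (apply prodmu_nonneg; auto).
    assert (0 <= prodmu mu w) by (apply prodmu_nonneg; auto).
    assert (prodmu mu w <= 1) by (apply prodmu_le1; auto).
    assert (0 <= mu g) by auto.
    assert (0 <= prodmu mu u * mu g * (1 - prodmu mu w)) by (apply Rmult_le_pos; [apply Rmult_le_pos|]; lra).
    assert (Hpm : m0 <= prodmu mu u * mu g) by nra.
    set (sq := (f (gmul y g) - f y) * (f (gmul y g) - f y)) in *.
    assert (0 <= sq) by (unfold sq; apply Rle_0_sqr).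
    assert (Hsq : sq <= D / m0).
    { apply Rmult_le_reg_l with m0; auto. unfold Rdiv. rewrite <- Rmult_assoc.
      rewrite (Rmult_comm m0 D), Rmult_assoc, Rinv_r by lra. nra. }
    assert (Hab : Rabs (f y - f (gmul y g)) <= sqrt (D / m0)).
    { rewrite <- sqrt_Rsqr_abs. apply sqrt_le_1_alt. unfold Rsqr. unfold sq in Hsq. nra. }
    rewrite gassoc. rewrite S_INR.
    replace (f y - f (gmul (gmul y g) (prodw w))) with
      ((f y - f (gmul y g)) + (f (gmul y g) - f (gmul (gmul y g) (prodw w)))) by ring.
    eapply Rle_trans; [apply Rabs_triang|]. lra.
Qed.
Fixpoint sumN (n : nat) (F : nat -> R) : R :=
  match n with O => 0 | S n => sumN n F + F n end.

Lemma sumN_ext n (F H : nat -> R) : (forall i, F i = H i) -> sumN n F = sumN n H.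
Proof. intros E; induction n; simpl; [auto| rewrite IHn, E; auto]. Qed.

Lemma sumN_tele n (H : nat -> R) : sumN n (fun i => H (S i) - H i) = H n - H O.
Proof. induction n; simpl; [ring| rewrite IHn; ring]. Qed.

Lemma sumN_dev n (F : nat -> R) a c :
  (forall i, (i < n)%nat -> Rabs (a - F i) <= c) -> Rabs (INR n * a - sumN n F) <= INR n * c.
Proof.
  induction n; intros Hb.
  - simpl. rewrite Rmult_0_l, Rminus_0_r, Rabs_R0. lra.
  - cbn [sumN]. rewrite S_INR.
    replace ((INR n + 1) * a - (sumN n F + F n)) with ((INR n * a - sumN n F) + (a - F n)) by ring.
    eapply Rle_trans; [apply Rabs_triang|].
    assert (Rabs (INR n * a - sumN n F) <= INR n * c) by (apply IHn; intros; apply Hb; lia).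
    assert (Rabs (a - F n) <= c) by (apply Hb; lia). lra.
Qed.

Lemma harm_shift {G : Group} (mu : G -> R) supp h gamma :
  harmonic mu supp h -> harmonic mu supp (fun y => h (gmul gamma y) - h y).
Proof.
  intros Hh x. rewrite (Hh (gmul gamma x)), (Hh x). clear Hh.
  induction supp as [|a l IH]; simpl; [ring|].
  rewrite <- IH, <- (gassoc _ gamma x a). ring.
Qed.

Lemma rev_poincare {G : Group} (mu : G -> R) supp h gamma k L m0 :
  (forall g, 0 <= mu g) -> (forall g, mu g <> 0 -> In g supp) -> (forall g, mu g <= 1) ->
  fold_right Rplus 0 (map mu supp) = 1 -> harmonic mu supp h -> 0 < m0 ->
  (0 < k)%nat -> gpow gamma k = gone ->
  (forall x i, (i < k)%nat -> exists w, Forall (fun g => mu g <> 0) w /\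
      gmul (ginv x) (gmul (gpow gamma i) x) = prodw w /\ (length w <= L)%nat /\ m0 <= prodmu mu w) ->
  forall x, let f := fun y => h (gmul gamma y) - h y in
  f x * f x <= (INR L * INR L / m0) *
     (iterP mu supp L (fun z => f z * f z) x - f x * f x).
Proof.
  intros Hmu Hs Hle1 Hsum Hh Hm0 Hk Hgk Hwords x f.
  assert (Hf : harmonic mu supp f) by (apply harm_shift; auto).
  set (D := iterP mu supp L (fun z => f z * f z) x - f x * f x).
  assert (HD : 0 <= D).
  { unfold D. assert (H0 := iterP_mono_j mu supp f 0 L x Hmu Hsum Hf ltac:(lia)). simpl in H0. lra. }
  set (s := sqrt (D / m0)).
  assert (Hs0 : 0 <= s) by apply sqrt_pos.
  assert (Hi : forall i, (i < k)%nat -> Rabs (f x - f (gmul (gpow gamma i) x)) <= INR L * s).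
  { intros i Hik. destruct (Hwords x i Hik) as [w [Hw [Heq [Hl Hm]]]].
    assert (P := path_bound mu supp f L x m0 Hmu Hs Hle1 Hsum Hf Hm0 w nil Hw (Forall_nil _)
                   ltac:(simpl; lia) ltac:(simpl; auto)).
    simpl prodw in P. rewrite gone_r in P. rewrite <- Heq, mul_inv_cancel_l in P.
    fold D s in P.
    eapply Rle_trans; [apply P|]. apply Rmult_le_compat_r; auto. apply le_INR; auto. }
  assert (Hsum0 : sumN k (fun i => f (gmul (gpow gamma i) x)) = 0).
  { rewrite (sumN_ext k _ (fun i => h (gmul (gpow gamma (S i)) x) - h (gmul (gpow gamma i) x))).
    - rewrite (sumN_tele k (fun i => h (gmul (gpow gamma i) x))).
      rewrite Hgk. simpl. rewrite gone_l. ring.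
    - intros i. unfold f. simpl. rewrite gassoc. reflexivity. }
  assert (Hdev := sumN_dev k (fun i => f (gmul (gpow gamma i) x)) (f x) (INR L * s) Hi).
  rewrite Hsum0, Rminus_0_r, Rabs_mult, Rabs_right in Hdev by (apply Rle_ge, pos_INR).
  assert (HkR : 0 < INR k) by (apply lt_0_INR; auto).
  assert (Hfx : Rabs (f x) <= INR L * s).
  { apply Rmult_le_reg_l with (INR k); auto. }
  assert (HsD : s * s = D / m0).
  { unfold s. apply sqrt_sqrt. unfold Rdiv; apply Rmult_le_pos; [lra| left; apply Rinv_0_lt_compat; lra]. }
  assert (Hff : f x * f x = Rabs (f x) * Rabs (f x)) by (rewrite <- Rabs_mult; symmetry; apply Rabs_right; apply Rle_ge, Rle_0_sqr).
  assert (Ha0 : 0 <= Rabs (f x)) by apply Rabs_pos.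
  assert (f x * f x <= (INR L * s) * (INR L * s)) by (rewrite Hff; apply Rmult_le_compat; auto).
  fold D.
  replace (INR L * INR L / m0 * D) with ((INR L * INR L) * (D / m0)) by (field; lra).
  rewrite <- HsD. lra.
Qed.
Lemma growth {G : Group} (S : list G) (mu : G -> R) supp h gamma wg Rr :
  (forall g, 0 <= mu g) -> fold_right Rplus 0 (map mu supp) = 1 ->
  (forall g, In g supp -> exists w, (Forall (fun s => In s (gens S)) w /\ g = prodw w) /\ (length w <= Rr)%nat) ->
  Forall (fun s => In s (gens S)) wg -> gamma = prodw wg ->
  forall n w N, Forall (fun s => In s (gens S)) w ->
  (length w + n * Rr + length wg <= N)%nat ->
  iterP mu supp n (fun z => (h (gmul gamma z) - h z) * (h (gmul gamma z) - h z)) (prodw w)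
  <= (2 * Mh S h N) * (2 * Mh S h N).
Proof.
  intros Hmu Hsum Hsupp Hwg Hg. induction n; intros w N Hw HN.
  - unfold iterP; simpl.
    assert (H1 : Rabs (h (gmul gamma (prodw w))) <= Mh S h N).
    { rewrite Hg, <- prodw_app. apply Mh_bound; [apply Forall_app; auto| rewrite length_app; lia]. }
    assert (H2 : Rabs (h (prodw w)) <= Mh S h N) by (apply Mh_bound; auto; lia).
    set (a := h (gmul gamma (prodw w))) in *. set (b := h (prodw w)) in *.
    assert (H3 : Rabs (a - b) <= 2 * Mh S h N).
    { unfold Rminus. eapply Rle_trans; [apply Rabs_triang|]. rewrite Rabs_Ropp. lra. }
    assert (H4 : (a - b) * (a - b) = Rabs (a - b) * Rabs (a - b)).
    { rewrite <- Rabs_mult. symmetry. apply Rabs_right, Rle_ge, Rle_0_sqr. }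
    rewrite H4. apply Rmult_le_compat; auto; apply Rabs_pos.
  - rewrite iterP_S. apply Pop_bound; auto.
    intros g Hgs. destruct (Hsupp g Hgs) as [wq [[Hwq Hgq] Hl]].
    rewrite Hgq, <- prodw_app. apply IHn; [apply Forall_app; auto| rewrite length_app; simpl in HN; lia].
Qed.
Theorem proposition3p3 (G : Group) (S : list G) (mu : G -> R) (supp : list G)
  (h : G -> R) :
  generates S ->
  fin_prob mu supp -> symmetric_meas mu -> nondegenerate mu ->
  harmonic mu supp h -> subexp_growth S h ->
  forall gamma : G, in_FC_center gamma -> finite_order gamma ->
  forall x : G, h (gmul gamma x) = h x.
Proof.
  intros Hgen [Hnd [Hmu [Hs Hsum]]] Hsym Hnondeg Hh Hsub gamma [Lg HLg] [k [Hk Hgk]] x.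
  assert (Hle1 : forall g, mu g <= 1).
  { intros g. destruct (Req_dec (mu g) 0) as [E|E]; [lra|].
    rewrite <- Hsum. apply (sumL_ge_term supp mu g); auto. }
  set (Lc := flat_map (fun c => map (gpow c) (seq 0 k)) Lg).
  destruct (uniform_words (fun y w => Forall (fun g => mu g <> 0) w /\ y = prodw w) (prodmu mu) Lc)
    as [L0 [m0 [Hm0 HL0]]].
  { intros y w [Hw _]. apply prodmu_pos; auto. }
  { intros y _. destruct (Hnondeg y) as [w [_ [Hw Hy]]]. exists w; auto. }
  set (L := (L0 + 1)%nat).
  assert (Hwords : forall x i, (i < k)%nat -> exists w, Forall (fun g => mu g <> 0) w /\
      gmul (ginv x) (gmul (gpow gamma i) x) = prodw w /\ (length w <= L)%nat /\ m0 <= prodmu mu w).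
  { intros y i Hi. rewrite conj_pow.
    destruct (HL0 (gpow (gmul (ginv y) (gmul gamma y)) i)) as [w [[Hw Hy] [Hl Hm]]].
    { unfold Lc. apply in_flat_map. exists (gmul (ginv y) (gmul gamma y)). split; auto.
      apply in_map, in_seq. lia. }
    exists w. unfold L. repeat split; auto; lia. }
  destruct (uniform_words (fun y w => Forall (fun s => In s (gens S)) w /\ y = prodw w) (fun _ => 1) supp)
    as [Rr [m1 [_ HRr]]].
  { intros; lra. }
  { intros y _. destruct (Hgen y) as [w [Hw Hy]]. exists w; auto. }
  assert (Hsupp : forall g, In g supp -> exists w, (Forall (fun s => In s (gens S)) w /\ g = prodw w) /\ (length w <= Rr)%nat).
  { intros g Hg. destruct (HRr g Hg) as [w [A [B _]]]. exists w; auto. }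
  destruct (Hgen gamma) as [wg [Hwg Hg]].
  set (f := fun y => h (gmul gamma y) - h y).
  set (Q := fun z => f z * f z).
  assert (Hf : harmonic mu supp f) by (apply harm_shift; auto).
  destruct (Req_dec (f x) 0) as [E|E]; [unfold f in E; lra| exfalso].
  set (q := f x * f x).
  assert (Hq : 0 < q) by (unfold q; nra).
  set (Kc := INR L * INR L / m0).
  assert (HLpos : 0 < INR L) by (apply lt_0_INR; unfold L; lia).
  assert (HKc : 0 < Kc) by (unfold Kc; apply Rdiv_lt_0_compat; [apply Rmult_lt_0_compat|]; lra).
  set (a := 1 + / Kc).
  assert (Ha : 1 < a) by (unfold a; assert (0 < / Kc) by (apply Rinv_0_lt_compat; auto); lra).
  assert (Hrev : forall y, a * Q y <= iterP mu supp L Q y).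
  { intros y. assert (H := rev_poincare mu supp h gamma k L m0 Hmu Hs Hle1 Hsum Hh Hm0 Hk Hgk Hwords y).

    unfold a. 
    assert (Q y / Kc <= iterP mu supp L Q y - Q y).
    { apply Rmult_le_reg_l with Kc; auto. unfold Rdiv.
      replace (Kc * (Q y * / Kc)) with (Q y) by (field; lra). exact H. }
    unfold Rdiv in H0. lra. }
  assert (Hpow : forall m, a ^ m * q <= iterP mu supp (m * L) Q x).
  { induction m.
    - simpl. unfold iterP, q, Q; simpl. lra.
    - rewrite Nat.mul_succ_l. unfold iterP at 1. rewrite Nat.iter_add. fold (iterP mu supp L Q).
      fold (iterP mu supp (m * L) (iterP mu supp L Q)).
      eapply Rle_trans; [| apply (iterP_mono mu supp (m * L) (fun y => a * Q y)); auto].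
      rewrite iterP_scal. simpl. assert (0 < a) by lra. nra. }
  destruct (Hgen x) as [w0 [Hw0 Hx0]].
  set (K := (length w0 + length wg)%nat).
  set (T := (L * Rr + 1)%nat).
  assert (Hgrow : forall m, a ^ m * q <= (2 * Mh S h (K + m * T)) * (2 * Mh S h (K + m * T))).
  { intros m. eapply Rle_trans; [apply Hpow|]. rewrite Hx0.
    apply (growth S mu supp h gamma wg Rr); auto. unfold K, T. nia. }
  assert (HTpos : 0 < INR T) by (apply lt_0_INR; unfold T; lia).
  set (c := ln a / (2 * INR T)).
  assert (Hlna : 0 < ln a) by (rewrite <- ln_1; apply ln_increasing; lra).
  assert (Hc : 0 < c) by (unfold c; apply Rdiv_lt_0_compat; lra).
  set (eps1 := exp (- (2 * c * INR K)) * q / 4).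
  assert (Heps1 : 0 < eps1) by (unfold eps1; unfold Rdiv; apply Rmult_lt_0_compat; [apply Rmult_lt_0_compat; [apply exp_pos|]|]; lra).
  destruct (Hsub c Hc (Rmin 1 eps1)) as [N0 HN0].
  { apply Rmin_pos; lra. }
  set (N := (K + N0 * T)%nat).
  specialize (HN0 N ltac:(unfold N, T; nia)).
  unfold R_dist in HN0. rewrite Rminus_0_r in HN0.
  set (M := Mh S h N) in *.
  set (v := exp (- c * INR N) * M) in *.
  assert (Hv1 : v * v < eps1).
  { assert (Rabs v < 1) by (eapply Rlt_le_trans; [apply HN0| apply Rmin_l]).
    assert (Rabs v < eps1) by (eapply Rlt_le_trans; [apply HN0| apply Rmin_r]).
    assert (v * v = Rabs v * Rabs v) by (rewrite <- Rabs_mult; symmetry; apply Rabs_right, Rle_ge, Rle_0_sqr).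
    assert (0 <= Rabs v) by apply Rabs_pos. nra. }
  assert (Hg0 := Hgrow N0). fold N in Hg0. fold M in Hg0.
  assert (Hexp : exp (- c * INR N) * exp (- c * INR N) * a ^ N0 = exp (- (2 * c * INR K))).
  { rewrite <- Rpower_pow by lra. unfold Rpower. rewrite <- !exp_plus. f_equal.
    unfold N. rewrite plus_INR, mult_INR. unfold c. field. lra. }
  assert (He : 0 < exp (- c * INR N)) by apply exp_pos.
  assert (Hv2 : eps1 <= v * v).
  { unfold eps1, v. rewrite <- Hexp.
    set (an := a ^ N0) in *. set (ee := exp (- c * INR N)) in *.
    assert (0 < ee * ee) by nra.
    assert (H4 : an * q / 4 <= M * M) by lra.
    replace (ee * ee * an * q / 4) with ((ee * ee) * (an * q / 4)) by (unfold Rdiv; ring).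
    replace (ee * M * (ee * M)) with ((ee * ee) * (M * M)) by ring.
    apply Rmult_le_compat_l; lra. }
  lra.
Qed.
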